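(* Let $(G,M)$ be a transformation group, let $K\subset L\subset N$ be subsets of $M$, and let $\tau$ be an admissible topology on $\mathcal{E}^G_K(L,N)$. Suppose $H$ is a subgroup of $G_K(N)$ and the restriction map $r:G_K(N)\to\mathcal{E}^G_K(L,N)^\tau$, $r(g)=g|_L$, has a local section $s:\mathcal{U}\to H\subset G_K(N)$ at $i_L$. Then: (1) The restriction map $r|_H:H\to\mathcal{E}^H(L,N)^\tau$ is a principal bundle with structure group $H_L$. (2)(i) The topology $\tau$ coincides with the quotient topology induced by $r$. (ii) $\mathcal{E}^H(L,N)^\tau$ is open in $\mathcal{E}^G_K(L,N)^\tau$. (iii) If $H$ is a normal subgroup of $G_K(N)$, then (a) each orbit of $H$ is closed and open in $\mathcal{E}^G_K(L,N)^\tau$ (in particular $\mathcal{E}^H(L,N)^\tau$ is closed and open in $\mathcal{E}^G_K(L,N)^\tau$), and (b) if $H\subset G_K(N)_0$, then $\mathcal{E}^H(L,N)^\tau=\mathcal{E}^G_K(L,N)^\tau_0$.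
   Context: A transformation group $(G,M)$ consists of a locally compact, $\sigma$-compact Hausdorff space $M$ and a topological group $G$ acting continuously and effectively on $M$; each $g\in G$ is identified with a homeomorphism of $M$. For subsets $K,N\subset M$: $G_K=\{g\in G:g|_K=\mathrm{id}_K\}$, $G(N)=G_{M\setminus N}$, $G_K(N)=G_K\cap G(N)$; for a subgroup $H$, $H_0$ is the connected component of the identity and $H_L=\{h\in H:h|_L=\mathrm{id}_L\}$. For $K\subset L\subset N$, $\mathcal{E}^G_K(L,N)=\{g|_L:L\to M\mid g\in G_K(N)\}$; $G_K(N)$ acts on it by $g\cdot f=gf$ and $r$ is the orbit map at the inclusion $i_L:L\subset M$. A topology on $\mathcal{E}^G_K(L,N)$ is admissible if this action is continuous; $\mathcal{E}^G_K(L,N)^\tau$ denotes the set with topology $\tau$, and for a subset $\mathcal{F}$, $\mathcal{F}^\tau$ has the subspace topology and $\mathcal{F}^\tau_0$ is the connected component of $i_L$. For a subgroup $H\subset G_K(N)$, $\mathcal{E}^H(L,N)=\{h|_L:h\in H\}$. A local section of a map $f:X\to Y$ at $y$ is a map $s:U\to X$ on a neighborhood $U$ of $y$ with $fs=$ the inclusion of $U$. *)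

(* Defs.v *)
From HB Require Import structures.
From mathcomp Require Import all_boot all_order all_algebra.
From mathcomp Require Import all_classical all_reals all_analysis.
Set Implicit Arguments. Unset Strict Implicit. Unset Printing Implicit Defensive.
Local Open Scope classical_set_scope.

Definition sigma_compact (M : topologicalType) : Prop :=
  exists Kn : nat -> set M, (forall n, compact (Kn n)) /\ \bigcup_n Kn n = setT.

(** A transformation group (G,M): M locally compact, sigma-compact, Hausdorff;
    G a topological group (multiplication [mul], inverse [inv], unit [one],
    with continuous [mul] and [inv]) acting continuously ([act]) and
    effectively ([act] injective, so g is identified with [act g]) on M. *)
Definition transformation_group (G M : topologicalType)
  (mul : G -> G -> G) (inv : G -> G) (one : G) (act : G -> M -> M) : Prop :=
  [/\ hausdorff_space M, locally_compact [set: M] & sigma_compact M] /\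
  (forall g h x, act (mul g h) x = act g (act h x)) /\
  (forall x, act one x = x) /\
  (forall g x, act (inv g) (act g x) = x /\ act g (act (inv g) x) = x) /\
  injective act /\
  continuous (fun p : G * G => mul p.1 p.2) /\
  continuous inv /\
  continuous (fun p : G * M => act p.1 p.2).

Definition fixes (G M : Type) (act : G -> M -> M) (g : G) (A : set M) : Prop :=
  forall x, A x -> act g x = x.

Definition GKN (G M : Type) (act : G -> M -> M) (K N : set M) : set G :=
  [set g | fixes act g K /\ fixes act g (~` N)].

Definition stab (G M : Type) (act : G -> M -> M) (H : set G) (L : set M) : set G :=
  [set h | H h /\ fixes act h L].

Definition restr (G M : Type) (act : G -> M -> M) (L : set M) (g : G)
  : {x : M | L x} -> M := fun x => act g (proj1_sig x).
Arguments restr {G M} act L g _.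

Definition rel_open (T : topologicalType) (A B : set T) : Prop :=
  exists O, open O /\ A `&` B = A `&` O.

Definition subgroup (G : Type) (mul : G -> G -> G) (inv : G -> G) (one : G)
  (H : set G) : Prop :=
  H one /\ (forall g h, H g -> H h -> H (mul g h)) /\ (forall g, H g -> H (inv g)).

Definition normal_in (G : Type) (mul : G -> G -> G) (inv : G -> G)
  (H S : set G) : Prop :=
  forall g h, S g -> H h -> H (mul (mul g h) (inv g)).

(** p : P -> B is a principal bundle with structure group S (a subgroup of X
    acting on P by right multiplication; all subsets carry subspace
    topologies): p maps P onto B, P is S-stable, and p is locally trivial:
    over an open W of B there is an S-equivariant homeomorphism
    phi : p^{-1}(W) ∩ P -> W × S over W, with inverse psi. *)
Definition principal_bundle (X Y : topologicalType) (mul : X -> X -> X)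
  (P : set X) (B : set Y) (p : X -> Y) (S : set X) : Prop :=
  p @` P = B /\
  (forall x h, P x -> S h -> P (mul x h)) /\
  forall b, B b -> exists (W : set Y) (phi : X -> Y * X) (psi : Y * X -> X),
    W b /\ W `<=` B /\ rel_open B W /\
    (forall x, P x -> W (p x) -> (phi x).1 = p x /\ S (phi x).2) /\
    (forall y h, W y -> S h -> P (psi (y, h)) /\ W (p (psi (y, h))) /\
                                 phi (psi (y, h)) = (y, h)) /\
    (forall x, P x -> W (p x) -> psi (phi x) = x) /\
    {within P `&` p @^-1` W, continuous phi} /\
    {within W `*` S, continuous psi} /\
    (forall x h, P x -> W (p x) -> S h ->
       phi (mul x h) = ((phi x).1, mul (phi x).2 h)).

(* Main.v *)
Require Import Defs.
From HB Require Import structures.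
From mathcomp Require Import all_boot all_order all_algebra.
From mathcomp Require Import all_classical all_reals all_analysis.
Set Implicit Arguments. Unset Strict Implicit. Unset Printing Implicit Defensive.
Local Open Scope classical_set_scope.

Section S.
Variables (G M : topologicalType) (mul : G -> G -> G) (inv : G -> G) (one : G)
  (act : G -> M -> M)
  (hTG : transformation_group mul inv one act)
  (K L N : set M) (hKL : K `<=` L) (hLN : L `<=` N)
  (ET : topologicalType) (emb : ET -> ({x : M | L x} -> M))
  (emb_inj : injective emb)
  (emb_range : range emb = [set f | exists g, GKN act K N g /\ f = restr act L g])
  (r : G -> ET) (hr : forall g, GKN act K N g -> emb (r g) = restr act L g)
  (actE : G -> ET -> ET)
  (hactE : forall g e, GKN act K N g -> emb (actE g e) = act g \o emb e)
  (admissible : {within GKN act K N `*` [set: ET],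
                  continuous (fun p : G * ET => actE p.1 p.2)})
  (H : set G) (hHsub : subgroup mul inv one H) (hHGKN : H `<=` GKN act K N)
  (U : set ET) (s : ET -> G)
  (hU : nbhs (r one) U)
  (hsH : forall u, U u -> H (s u))
  (hs_cont : {within U, continuous s})
  (hrs : forall u, U u -> r (s u) = u).

Local Notation GK := (GKN act K N).
Lemma act_inj : injective act. Proof. by case: hTG => _ [_ [_ [_ []]]]. Qed.
Lemma actM g h x : act (mul g h) x = act g (act h x). Proof. by case: hTG => _ []. Qed.
Lemma act1 x : act one x = x. Proof. by case: hTG => _ [_ []]. Qed.
Lemma actVK g x : act (inv g) (act g x) = x. Proof. by case: hTG => _ [_ [_ [h _]]]; case: (h g x). Qed.
Lemma actKV g x : act g (act (inv g) x) = x. Proof. by case: hTG => _ [_ [_ [h _]]]; case: (h g x). Qed.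
Lemma geq a b : (forall x, act a x = act b x) -> a = b.
Proof. by move=> h; apply: act_inj; apply: funext. Qed.
Lemma mulA a b c : mul (mul a b) c = mul a (mul b c).
Proof. by apply: geq => x; rewrite !actM. Qed.
Lemma mul1g a : mul one a = a. Proof. by apply: geq => x; rewrite actM act1. Qed.
Lemma mulg1 a : mul a one = a. Proof. by apply: geq => x; rewrite actM act1. Qed.
Lemma mulVg a : mul (inv a) a = one. Proof. by apply: geq => x; rewrite actM actVK act1. Qed.
Lemma mulgV a : mul a (inv a) = one. Proof. by apply: geq => x; rewrite actM actKV act1. Qed.
Lemma invK a : inv (inv a) = a.
Proof. by rewrite -[RHS]mul1g -(mulVg (inv a)) mulA mulVg mulg1. Qed.
Lemma mul_cont : continuous (fun p : G * G => mul p.1 p.2).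
Proof. by case: hTG => _ [_ [_ [_ [_ []]]]]. Qed.
Lemma inv_cont : continuous inv.
Proof. by case: hTG => _ [_ [_ [_ [_ [_ []]]]]]. Qed.

Lemma fixesV g A : fixes act g A -> fixes act (inv g) A.
Proof. by move=> h x Ax; rewrite -{1}(h x Ax) actVK. Qed.
Lemma fixesM g h A : fixes act g A -> fixes act h A -> fixes act (mul g h) A.
Proof. by move=> hg hh x Ax; rewrite actM hh // hg. Qed.
Lemma GK1 : GK one. Proof. by split => x _; rewrite act1. Qed.
Lemma GKM a b : GK a -> GK b -> GK (mul a b).
Proof. by move=> [? ?] [? ?]; split; apply: fixesM. Qed.
Lemma GKV a : GK a -> GK (inv a).
Proof. by move=> [? ?]; split; apply: fixesV. Qed.
Lemma H1 : H one. Proof. by case: hHsub. Qed.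
Lemma HM a b : H a -> H b -> H (mul a b). Proof. by case: hHsub => _ []; auto. Qed.
Lemma HV a : H a -> H (inv a). Proof. by case: hHsub => _ []; auto. Qed.

Lemma r_act g : GK g -> r g = actE g (r one).
Proof.
move=> Gg; apply: emb_inj; rewrite hactE // !hr //; try exact: GK1.
by apply: funext => -[x Lx]; rewrite /restr /= act1.
Qed.
Lemma actEM a b e : GK a -> GK b -> actE (mul a b) e = actE a (actE b e).
Proof.
move=> Ga Gb; apply: emb_inj; rewrite !hactE //; last exact: GKM.
by apply: funext => y /=; rewrite actM.
Qed.
Lemma actE1 e : actE one e = e.
Proof. apply: emb_inj; rewrite hactE; last exact: GK1. by apply: funext => y /=; rewrite act1. Qed.
Lemma r_surj e : exists2 g, GK g & e = r g.
Proof.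
have : range emb (emb e) by exists e.
rewrite emb_range => -[g [Gg he]]; exists g => //; apply: emb_inj; rewrite hr //.
Qed.
Lemma r_fix a b : GK a -> GK b -> r a = r b -> fixes act (mul (inv b) a) L.
Proof.
move=> Ga Gb /(congr1 emb); rewrite !hr // => e x Lx.
have := congr1 (fun f => f (exist _ x Lx)) e; rewrite /restr /= => he.
by rewrite actM he actVK.
Qed.
Lemma r_mulfix a h : GK a -> GK h -> fixes act h L -> r (mul a h) = r a.
Proof.
move=> Ga Gh fh; apply: emb_inj; rewrite !hr //; last exact: GKM.
by apply: funext => -[x Lx]; rewrite /restr /= actM fh.
Qed.
Lemma r_mul a b : GK a -> GK b -> r (mul a b) = actE a (r b).
Proof. by move=> Ga Gb; rewrite r_act ?actEM -?r_act //; apply: GKM. Qed.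

Lemma pair_l (X Y : topologicalType) (a : X) (b : Y) (Q : set (X * Y)) :
  nbhs (a, b) Q -> nbhs a (fun x => Q (x, b)).
Proof.
move=> hQ; have hp : (fun x => (x, b)) @ nbhs a --> (a, b).
  by apply: cvg_pair; [exact: cvg_id | exact: cvg_cst].
exact: hp _ hQ.
Qed.
Lemma pair_r (X Y : topologicalType) (a : X) (b : Y) (Q : set (X * Y)) :
  nbhs (a, b) Q -> nbhs b (fun y => Q (a, y)).
Proof.
move=> hQ; have hp : (fun y => (a, y)) @ nbhs b --> (a, b).
  by apply: cvg_pair; [exact: cvg_cst | exact: cvg_id].
exact: hp _ hQ.
Qed.

Lemma adm_at c e V : GK c -> nbhs (actE c e) V ->
  nbhs (c, e) (fun p => GK p.1 -> V (actE p.1 p.2)).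
Proof.
move=> Gc hV.
have h := (subspace_continuousP _ _).1 admissible (c, e) (conj Gc I) V hV.
have h' : nbhs (c, e) (fun p => (GK `*` [set: ET]) p -> V (actE p.1 p.2)) := h.
by apply: filterS h' => p hp Gp; apply: hp.
Qed.

Lemma T_cont c : GK c -> continuous (actE c).
Proof.
move=> Gc e V hV; have := pair_r (adm_at Gc hV).
by apply: filterS => e' /=; apply.
Qed.

Lemma r_cont_at g V : GK g -> nbhs (r g) V -> nbhs g (fun g' => GK g' -> V (r g')).
Proof.
move=> Gg; rewrite r_act // => hV; have := pair_l (adm_at Gg hV).
by apply: filterS => g' /= h Gg'; rewrite r_act //; apply: h.
Qed.

Lemma r_cont : {within GK, continuous r}.
Proof.
apply/subspace_continuousP => g Gg V hV; exact: r_cont_at.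
Qed.

Definition Ok k := interior (actE (inv k) @^-1` U).
Lemma Ok_open k : open (Ok k). Proof. exact: open_interior. Qed.
Lemma Ok_U k e : Ok k e -> U (actE (inv k) e).
Proof. by move/interior_subset. Qed.
Lemma Ok_rk k : GK k -> Ok k (r k).
Proof.
move=> Gk; rewrite /Ok /interior /=; apply: (T_cont (GKV Gk)).
by rewrite -r_mul ?mulVg //; apply: GKV.
Qed.

Lemma sT_cont k e : GK k -> Ok k e ->
  (fun e' => s (actE (inv k) e')) @ nbhs e --> s (actE (inv k) e).
Proof.
move=> Gk Oe; have Ue := Ok_U Oe.
have hs := (subspace_continuousP _ _).1 hs_cont _ Ue.
apply: cvg_comp hs => P /= hP.
have hP' : nbhs (actE (inv k) e) (fun y => U y -> P y) := hP.
have h1 := T_cont (GKV Gk) hP'.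
have h2 : nbhs e (actE (inv k) @^-1` U) := Oe.
by apply: filterS2 h1 h2 => x /= h hx; apply: h.
Qed.

Definition sg k e := mul k (s (actE (inv k) e)).

Lemma mulk_cont k : continuous (mul k).
Proof.
move=> x V hV; have := pair_r (@mul_cont (k, x) V hV); exact.
Qed.

Lemma sg_cont k e : GK k -> Ok k e -> sg k @ nbhs e --> sg k e.
Proof.
move=> Gk Oe; apply: (cvg_comp _ (mul k) (sT_cont Gk Oe)); exact: mulk_cont.
Qed.

Lemma sgH k e : H k -> U (actE (inv k) e) -> H (sg k e).
Proof. by move=> Hk Oe; apply: HM => //; apply: hsH. Qed.
Lemma sgGK k e : GK k -> U (actE (inv k) e) -> GK (sg k e).
Proof. by move=> Hk Oe; apply: GKM => //; apply/hHGKN/hsH. Qed.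

Lemma r_sg k e : GK k -> U (actE (inv k) e) -> r (sg k e) = e.
Proof.
move=> Gk Ue; rewrite /sg r_mul //; last by apply/hHGKN/hsH.
rewrite hrs //.
by rewrite -actEM ?mulgV ?actE1 //; apply: GKV.
Qed.

Lemma rH_open : open (r @` H).
Proof.
rewrite openE => _ [h Hh <-]; have Gh := hHGKN Hh.
have : nbhs (r h) (actE (inv h) @^-1` U) := Ok_rk Gh.
apply: filterS => e Ue; exists (sg h e); [exact: sgH | exact: r_sg].
Qed.

Lemma quot V : open V <-> rel_open GK (r @^-1` V).
Proof.
split.
  move=> oV.
  have : open (r @^-1` V : set (subspace GK)).
    by apply: open_comp => // x _; apply: r_cont.
  case/open_subspaceP => O oO hO; exists O; split => //.
  by rewrite setIC -hO setIC.
case=> O [oO hO]; rewrite openE => e Ve.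
have [g Gg eg] := r_surj e; subst e.
have Og := Ok_rk Gg.
have hc := sg_cont Gg Og.
have hO1 : O (sg g (r g)).
  have : (GK `&` (r @^-1` V)) (sg g (r g)).
    split; first by apply: sgGK => //; apply: Ok_U.
    by rewrite /= r_sg //; apply: Ok_U.
  by rewrite hO => -[].
have h1 : nbhs (r g) (sg g @^-1` O).
  by apply: hc; rewrite nbhsE /=; exists O.
have h2 : nbhs (r g) (Ok g) := @open_nbhs_nbhs _ _ _ (conj (Ok_open g) Og).
apply: filterS2 h1 h2 => e' /= Oe' Ok'.
have Ue' := Ok_U Ok'.
have : (GK `&` O) (sg g e') by split => //; apply: sgGK.
by rewrite -hO => -[_]; rewrite /= r_sg.
Qed.

Definition Orb e := [set actE h e | h in H].

Lemma Orb_self e : Orb e e.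
Proof. by exists one; [exact: H1 | exact: actE1]. Qed.

Lemma Orb_pre g : normal_in mul inv H GK -> GK g ->
  Orb (r g) = actE (inv g) @^-1` (r @` H).
Proof.
move=> nH Gg; have Gi := GKV Gg.
apply/seteqP; split => e.
  case=> h Hh <-{e} /=; have Gh := hHGKN Hh.
  exists (mul (mul (inv g) h) g).
    by have := nH (inv g) h Gi Hh; rewrite invK.
  rewrite r_mul //; last by apply: GKM => //; apply: GKM.
  by rewrite actEM.
case=> h' Hh' /= he; have Gh' := hHGKN Hh'.
exists (mul (mul g h') (inv g)); first exact: nH.
have -> : e = actE g (r h') by rewrite he -actEM ?mulgV ?actE1.
rewrite -!r_mul //; last by apply: GKM => //; apply: GKM.
by rewrite !mulA mulVg mulg1.
Qed.

Lemma Orb_open e : normal_in mul inv H GK -> open (Orb e).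
Proof.
move=> nH; have [g Gg ->] := r_surj e.
rewrite Orb_pre //; apply: open_comp rH_open => x _.
exact: (T_cont (GKV Gg)).
Qed.

Lemma Orb_closed e : normal_in mul inv H GK -> closed (Orb e).
Proof.
move=> nH; rewrite -openC openE => e' ne'.
have : nbhs e' (Orb e') by apply: open_nbhs_nbhs; split; [exact: Orb_open | exact: Orb_self].
apply: filterS => e'' [h1 Hh1 <-] [h2 Hh2 he]; apply: ne'.
exists (mul (inv h1) h2); first by apply: HM => //; apply: HV.
have G1 := hHGKN Hh1; have G2 := hHGKN Hh2.
by rewrite actEM ?he -?actEM ?mulVg ?actE1 //; apply: GKV.
Qed.

Lemma rH_Orb : r @` H = Orb (r one).
Proof.
by apply/seteqP; split => e [h Hh <-]; exists h => //; rewrite (r_act (hHGKN Hh)).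
Qed.

Lemma cc_part : normal_in mul inv H GK ->
  H `<=` connected_component GK one ->
  r @` H = connected_component [set: ET] (r one).
Proof.
move=> nH sH; apply/seteqP; split.
  move=> _ [h Hh <-]; have [C [C1 CG cC] Ch] := sH h Hh.
  exists (r @` C); last by exists h.
  split => //.
  apply: connected_continuous_connected => //.
  exact: continuous_subspaceW CG r_cont.
set C := connected_component _ _.
have cC : connected C := @component_connected _ _ _.
have hb := cC (C `&` (r @` H)).
have C1 : C (r one) by apply: connected_component_refl.
have rH1 : (r @` H) (r one) by exists one; [exact: H1|].
have := hb (ex_intro _ (r one) (conj C1 rH1)).
move=> /(_ (ex_intro2 _ _ (r @` H) rH_open erefl)).
have cl : closed (r @` H) by rewrite rH_Orb; exact: Orb_closed.
move=> /(_ (ex_intro2 _ _ (r @` H) cl erefl)) => eq e Ce.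
by move: Ce; rewrite -eq => -[].
Qed.

Lemma bundle : principal_bundle mul H (r @` H) r (stab act H L).
Proof.
split; first by [].
split.
  by move=> x h Hx [Hh fh]; apply: HM.
move=> _ [k Hk <-]; have Gk := hHGKN Hk.
pose phi := fun x => (r x, mul (inv (sg k (r x))) x).
pose psi := fun p : ET * G => mul (sg k p.1) p.2.
exists (Ok k), phi, psi.
have hsg : forall e, Ok k e -> H (sg k e) /\ r (sg k e) = e.
  by move=> e Oe; split; [apply: sgH | apply: r_sg]; rewrite //; apply: Ok_U.
split; first exact: Ok_rk.
split.
  by move=> e Oe; exists (sg k e); case: (hsg e Oe).
split; first by exists (Ok k); split => //; exact: Ok_open.
split.
  move=> x Hx Ox; split => //; have [Hs rs] := hsg _ Ox.
  split; first by apply: HM => //; apply: HV.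
  by apply: r_fix; [exact: hHGKN | exact: hHGKN | rewrite rs].
split.
  move=> y h Oy [Hh fh]; have [Hs rs] := hsg _ Oy.
  have Gs := hHGKN Hs; have Gh := hHGKN Hh.
  have e1 : r (psi (y, h)) = y by rewrite /psi /= r_mulfix.
  split; first exact: HM.
  split; first by rewrite e1.
  by rewrite /phi e1 /psi /= -mulA mulVg mul1g.
split.
  by move=> x Hx Ox; rewrite /psi /phi /= -mulA mulgV mul1g.
split.
  apply/subspace_continuousP => x [Hx Ox]; have Gx := hHGKN Hx.
  have hr1 : r @ within (H `&` r @^-1` Ok k) (nbhs x) --> r x.
    move=> V hV; have := r_cont_at Gx hV.
    by apply: filterS => g hg [Hg _]; apply: hg; apply: hHGKN.
  apply: cvg_pair => //.
  apply: continuous2_cvg.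
  - exact: (@mul_cont (_, _)).
  - have h2 := cvg_comp r (sg k) hr1 (sg_cont Gk Ox).
    exact: (cvg_comp _ inv h2 (@inv_cont _)).
  - exact: cvg_within.
split.
  apply/subspace_continuousP => -[y h] [Oy _].
  apply: cvg_within_filter.
  apply: continuous2_cvg.
  - exact: (@mul_cont (_, _)).
  - exact: (cvg_comp fst (sg k) cvg_fst (sg_cont Gk Oy)).
  - exact: cvg_snd.
move=> x h Hx Ox [Hh fh]; have Gx := hHGKN Hx; have Gh := hHGKN Hh.
by rewrite /phi /= r_mulfix // mulA.
Qed.

Lemma main_sec :
  principal_bundle mul H (r @` H) r (stab act H L) /\
  (forall V : set ET, open V <-> rel_open (GKN act K N) (r @^-1` V)) /\
  open (r @` H) /\
  (normal_in mul inv H (GKN act K N) ->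
     (forall e : ET, open [set actE h e | h in H] /\ closed [set actE h e | h in H]) /\
     (open (r @` H) /\ closed (r @` H)) /\
     (H `<=` connected_component (GKN act K N) one ->
        r @` H = connected_component [set: ET] (r one))).
Proof using All.
split; first exact: bundle.
split; first exact: quot.
split; first exact: rH_open.
move=> nH; split.
  by move=> e; split; [exact: Orb_open | exact: Orb_closed].
split; first by split; [exact: rH_open | rewrite rH_Orb; exact: Orb_closed].
exact: cc_part.
Qed.
End S.

Theorem lemma3p1
  (G M : topologicalType) (mul : G -> G -> G) (inv : G -> G) (one : G)
  (act : G -> M -> M)
  (hTG : transformation_group mul inv one act)
  (K L N : set M) (hKL : K `<=` L) (hLN : L `<=` N)
  (ET : topologicalType) (emb : ET -> ({x : M | L x} -> M))
  (emb_inj : injective emb)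
  (emb_range : range emb = [set f | exists g, GKN act K N g /\ f = restr act L g])
  (r : G -> ET) (hr : forall g, GKN act K N g -> emb (r g) = restr act L g)
  (actE : G -> ET -> ET)
  (hactE : forall g e, GKN act K N g -> emb (actE g e) = act g \o emb e)
  (admissible : {within GKN act K N `*` [set: ET],
                  continuous (fun p : G * ET => actE p.1 p.2)})
  (H : set G) (hHsub : subgroup mul inv one H) (hHGKN : H `<=` GKN act K N)
  (U : set ET) (s : ET -> G)
  (hU : nbhs (r one) U)
  (hsH : forall u, U u -> H (s u))
  (hs_cont : {within U, continuous s})
  (hrs : forall u, U u -> r (s u) = u) :
  (* (1) *)
  principal_bundle mul H (r @` H) r (stab act H L) /\
  (* (2)(i) tau is the quotient topology of r : G_K(N) -> E *)
  (forall V : set ET, open V <-> rel_open (GKN act K N) (r @^-1` V)) /\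
  (* (2)(ii) *)
  open (r @` H) /\
  (* (2)(iii) *)
  (normal_in mul inv H (GKN act K N) ->
     (forall e : ET, open [set actE h e | h in H] /\ closed [set actE h e | h in H]) /\
     (open (r @` H) /\ closed (r @` H)) /\
     (H `<=` connected_component (GKN act K N) one ->
        r @` H = connected_component [set: ET] (r one))).
Proof.
exact: (@main_sec G M mul inv one act hTG K L N hKL hLN ET emb emb_inj emb_range
  r hr actE hactE admissible H hHsub hHGKN U s hU hsH hs_cont hrs).
Qed.
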